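(* Let $\mathcal{T}$ be a tree with costs $c:V(\mathcal{T})\to\mathbb{R}_{>0}$, let $a\ge 0$ be such that some vertex $v$ has $c(v)\le a$, and let $k=k(\mathcal{T},c)$. Construct $\mathcal{X},\mathcal{Y},\mathcal{Z}$ and $\mathcal{T}_{\mathcal{Z}}$ as described (for any choices made in the construction). Then $|V(\mathcal{T}_{\mathcal{Z}})|\le 4k-3$.
   Context: For $t\ge 0$, a heavy module with respect to $t$ is a set $H\subseteq V(\mathcal{T})$ with $\mathcal{T}[H]$ connected, $c(v)>t$ for all $v\in H$, and maximal with these properties; $k(\mathcal{T},c,t)$ is the number of such modules and $k(\mathcal{T},c)=\max_{t\ge0}k(\mathcal{T},c,t)$. For $S\subseteq V(\mathcal{T})$, $\mathcal{T}\langle S\rangle$ is the minimal subtree containing $S$; for vertices $u,v$, $\mathcal{P}_{\mathcal{T}}(u,v)$ is the set of vertices on the $u$–$v$ path excluding $u,v$. Construction: $\mathcal{X}$ contains one arbitrarily chosen vertex from each heavy module with respect to $a$. $\mathcal{Y}=\mathcal{X}\cup\{v\in V(\mathcal{T}\langle\mathcal{X}\rangle):\deg_{\mathcal{T}\langle\mathcal{X}\rangle}(v)\ge 3\}$. $\mathcal{Z}$ consists of $\mathcal{Y}$ together with, for every pair $u,v\in\mathcal{Y}$ with $\mathcal{P}_{\mathcal{T}}(u,v)\ne\emptyset$ and $\mathcal{P}_{\mathcal{T}}(u,v)\cap\mathcal{Y}=\emptyset$, a vertex of $\mathcal{P}_{\mathcal{T}}(u,v)$ of minimum cost. The auxiliary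 tree is $\mathcal{T}_{\mathcal{Z}}$ with vertex set $\mathcal{Z}$ and edges $uv$ for all $u,v\in\mathcal{Z}$ with $\mathcal{P}_{\mathcal{T}}(u,v)\cap\mathcal{Z}=\emptyset$. *)

(* Defs.v *)
From mathcomp Require Import all_boot all_order all_algebra.
Set Implicit Arguments. Unset Strict Implicit. Unset Printing Implicit Defensive.
Import Order.TTheory GRing.Theory Num.Theory.
Local Open Scope ring_scope.

Section TreeDefs.
Variable V : finType.
Variable e : rel V.

(* simple path u = x0, x1, ..., xn = v, given as u :: p *)
Definition upath (u v : V) (p : seq V) : bool :=
  [&& path e u p, last u p == v & uniq (u :: p)].

Definition is_tree : Prop :=
  [/\ symmetric e, irreflexive e, (forall x y, connect e x y)
    & (forall u v p q, upath u v p -> upath u v q -> p = q)].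

Definition restr (H : {set V}) : rel V :=
  [rel x y | [&& e x y, x \in H & y \in H]].

Definition connectedb (H : {set V}) : bool :=
  [forall x in H, forall y in H, connect (restr H) x y].

Variable R : realFieldType.
Variable c : V -> R.

Definition heavy_setb (t : R) (H : {set V}) : bool :=
  [&& H != set0, connectedb H & [forall v in H, t < c v]].

Definition heavy_module (t : R) (H : {set V}) : bool :=
  heavy_setb t H &&
  [forall H' : {set V}, (H \subset H') && heavy_setb t H' ==> (H' == H)].

Definition heavy_modules (t : R) : {set {set V}} := [set H | heavy_module t H].

Definition kt (t : R) : nat := #|heavy_modules t|.

Definition min_subtree (S : {set V}) : {set V} :=
  \bigcap_(H : {set V} | (S \subset H) && connectedb H) H.

Definition deg_in (H : {set V}) (v : V) : nat := #|[set w in H | e v w]|.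

Definition Yset (X : {set V}) : {set V} :=
  X :|: [set v in min_subtree X | (3 <= deg_in (min_subtree X) v)%N].

Definition inner (u v w : V) : Prop :=
  w <> u /\ w <> v /\ exists p, upath u v p /\ w \in p.

Definition good_pair (Y : {set V}) (u v : V) : Prop :=
  [/\ u \in Y, v \in Y, (exists w, inner u v w)
    & (forall w, inner u v w -> w \notin Y)].

End TreeDefs.

(* Main.v *)
Require Import Defs.
From mathcomp Require Import all_boot all_order all_algebra zify.
Set Implicit Arguments. Unset Strict Implicit. Unset Printing Implicit Defensive.

Lemma card_union2 (T : finType) (A B : {set T}) :
  (forall y, y \in A -> y \in B -> False) -> #|A :|: B| = #|A| + #|B|.
Proof.
move=> dis; rewrite cardsU.
have -> : A :&: B = set0.
  apply/setP => y; rewrite !inE; apply/negbTE/negP => /andP[h1 h2]; exact: dis h1 h2.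
by rewrite cards0 subn0.
Qed.

Lemma card_bigcup_le (I T : finType) (P : {pred I}) (F : I -> {set T}) :
  #|\bigcup_(i in P) F i| <= \sum_(i in P) #|F i|.
Proof.
elim/big_rec2: _ => [|i n U _ IH]; first by rewrite cards0.
by apply: leq_trans (leq_card_setU _ _) _; rewrite leq_add2l.
Qed.

Lemma card_bigcup_disj (I T : finType) (P : {pred I}) (F : I -> {set T}) :
  (forall i j y, i \in P -> j \in P -> i != j -> y \in F i -> y \in F j -> False) ->
  \sum_(i in P) #|F i| = #|\bigcup_(i in P) F i|.
Proof.
move=> dis; rewrite -big_enum -[\bigcup_(i in P) F i]big_enum.
have : uniq (enum P) by exact: enum_uniq.
have : forall i, i \in enum P -> i \in P by move=> i; rewrite mem_enum.
elim: (enum P) => [|i s IH] /=; first by rewrite !big_nil cards0.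
move=> sP /andP[nis us]; rewrite !big_cons IH //; last first.
  by move=> j js; apply: sP; rewrite inE js orbT.
rewrite card_union2 // => y yi; rewrite bigcup_seq => /bigcupP [j js yj].
apply: (dis i j y) => //; first by apply: sP; rewrite inE eqxx.
  by apply: sP; rewrite inE js orbT.
by apply: contraNneq nis => ->.
Qed.

Lemma card_setI1 (T : finType) (A : {set T}) v : #|A :&: [set v]| = (v \in A).
Proof.
case: (boolP (v \in A)) => h.
  by rewrite (setIidPr _) ?cards1 // sub1set.
rewrite (_ : _ :&: _ = set0) ?cards0 //; apply/setP => y; rewrite !inE.
by apply/negbTE; apply: contraNN h => /andP[yA /eqP <-].
Qed.

Lemma count_inj (T : finType) (R : T -> T -> Prop) n : forall (A Bs : {set T}),
  #|A| <= n ->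
  (forall z, z \in A -> exists2 y, y \in Bs & R y z) ->
  (forall y z1 z2, R y z1 -> R y z2 -> z1 = z2) -> #|A| <= #|Bs|.
Proof.
elim: n => [|n IH] A Bs hn wit inj.
  by move: hn; rewrite leqn0 => /eqP ->.
case: (set_0Vmem A) => [-> | [z0 z0A]]; first by rewrite cards0.
have [y0 y0B Ry0] := wit z0 z0A.
rewrite (cardsD1 z0 A) (cardsD1 y0 Bs) z0A y0B !add1n ltnS.
apply: IH => //.
  by move: hn; rewrite (cardsD1 z0 A) z0A.
move=> z; rewrite !inE => /andP[zz0 zA].
have [y yB Ry] := wit z zA; exists y => //.
rewrite in_setD1 yB andbT; apply/eqP => yy0; move/eqP: zz0; apply.
by apply: inj Ry _; rewrite yy0.
Qed.
Section Tree.
Variable V : finType.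
Variable e : rel V.
Hypothesis esymm : symmetric e.
Hypothesis eirr : irreflexive e.
Hypothesis econ : forall x y, connect e x y.
Hypothesis euniq : forall u v p q, upath e u v p -> upath e u v q -> p = q.

Lemma edge_neq x y : e x y -> x != y.
Proof. by apply: contraTneq => ->; rewrite eirr. Qed.

Lemma restr_sub H : subrel (restr e H) e.
Proof. by move=> x y /and3P[]. Qed.

Lemma restr_sym H : symmetric (restr e H).
Proof. by move=> x y; rewrite /restr /= esymm; do 2 case: (_ \in H); rewrite ?andbF. Qed.

Lemma conn_sym H x y : connect (restr e H) x y = connect (restr e H) y x.
Proof. exact: (sym_connect_sym (restr_sym H)). Qed.

Lemma path_restr_all H x p : path (restr e H) x p -> all [in H] p.
Proof. by elim: p x => //= y p IH x /andP[/and3P[_ _ ->] /IH]. Qed.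

Lemma conn_in H x y : connect (restr e H) x y -> x != y -> y \in H.
Proof.
case/connectP => p pp ->; case: p pp => [|z p] /=; first by rewrite eqxx.
move=> pp _; move/allP: (path_restr_all (p := z :: p) pp); apply; exact: mem_last.
Qed.

Lemma conn_upath (r : rel V) x y : connect r x y ->
  exists p, [/\ path r x p, last x p = y & uniq (x :: p)].
Proof.
case/connectP => p pp ->; case/shortenP: pp => q pq uq _.
by exists q.
Qed.

Lemma upath_ex x y : exists p, upath e x y p.
Proof.
have [p [pp lp up]] := conn_upath (econ x y).
by exists p; rewrite /upath pp lp eqxx up.
Qed.

Lemma upath_restr H x y p : path (restr e H) x p -> last x p = y -> uniq (x :: p) ->
  upath e x y p.
Proof.
move=> pp lp up; rewrite /upath lp eqxx up !andbT.
exact: (sub_path (@restr_sub H) pp).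
Qed.

Lemma upath_self x p : upath e x x p -> p = [::].
Proof.
case/and3P => _ /eqP lp /andP[xnp _]; case: p lp xnp => // y p /= lp.
by rewrite -lp mem_last.
Qed.

Lemma inner_self x w : inner e x x w -> False.
Proof. by case=> _ [_ [p [/upath_self -> ]]]. Qed.


Lemma connectedbP (H : {set V}) :
  reflect (forall x y : V, x \in H -> y \in H -> connect (restr e H) x y) (connectedb e H).
Proof.
apply: (iffP forall_inP) => [h x y xH yH | h x xH].
  by move/forall_inP: (h x xH); apply.
by apply/forall_inP => y yH; apply: h.
Qed.

Definition C (v w : V) : {set V} := [set y | connect (restr e (~: [set v])) w y].

Lemma inC v w y : (y \in C v w) = connect (restr e (~: [set v])) w y.
Proof. by rewrite inE. Qed.

Lemma wC v w : w \in C v w.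
Proof. by rewrite inC connect0. Qed.

Lemma vnotC v w : e v w -> v \notin C v w.
Proof.
move=> evw; apply/negP; rewrite inC => /conn_in.
by rewrite eq_sym (edge_neq evw) !inE eqxx => /(_ isT).
Qed.

Lemma L1 v w1 w2 : e v w1 -> e v w2 -> w2 \in C v w1 -> w1 = w2.
Proof.
move=> e1 e2; rewrite inC => /conn_upath [p [pp lp up]].
have al := path_restr_all pp.
have u1 : upath e v w2 (w1 :: p).
  apply/and3P; split; first by rewrite /= e1 (sub_path (@restr_sub _) pp).
    by rewrite /= lp.
  rewrite cons_uniq up andbT inE negb_or (edge_neq e1) /=; apply/negP => vp.
  by move/allP: al => /(_ v vp); rewrite !inE eqxx.
have u2 : upath e v w2 [:: w2].
  by rewrite /upath /= e2 eqxx /= inE (edge_neq e2).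
by case: (euniq u1 u2).
Qed.

Lemma L2 v w a b : e v w -> a \in C v w -> b \notin C v w -> e a b -> b = v /\ a = w.
Proof.
move=> evw aC bC eab.
have av : a != v by apply: contraTneq aC => ->; rewrite vnotC.
case: (eqVneq b v) => [bv | bv].
  split=> //; apply/esym/(L1 evw) => //; by rewrite esymm -bv.
exfalso; move: aC bC; rewrite !inC => aC /negP; apply.
apply: connect_trans aC (connect1 _).
by rewrite /restr /= eab !inE av bv.
Qed.

Lemma L4 v w : e v w -> connectedb e (~: C v w).
Proof.
move=> evw.
have key : forall x, x \notin C v w -> connect (restr e (~: C v w)) x v.
  move=> x xC; have := econ x v; case/connectP => p pp lp.
  elim: p x xC pp lp => [|y p IH] x xC /=; first by move=> _ ->; rewrite connect0.
  case/andP => exy pp lp.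
  case: (boolP (y \in C v w)) => yC.
    have [xv _] : x = v /\ y = w by apply: L2 evw yC xC _; rewrite esymm.
    by rewrite xv connect0.
  apply: connect_trans (connect1 _) (IH y yC pp lp).
  by rewrite /restr /= exy !in_setC xC yC.
apply/connectedbP => x y; rewrite !in_setC => xC yC.
by apply: connect_trans (key x xC) _; rewrite conn_sym key.
Qed.


Lemma L5 (H : {set V}) v y : connect (restr e H) v y -> y != v ->
  exists w, [/\ e v w, w \in H & y \in C v w].
Proof.
case/conn_upath => p [pp lp up] yv.
case: p pp lp up => [|w p]; first by move=> _ /= lp; rewrite lp eqxx in yv.
move=> /= /andP[/and3P[evw _ wH] pp] lp /andP[vnp _].
exists w; split => //; rewrite inC; apply/connectP; exists p => //.
have sub : {in ~: [set v] &, subrel (restr e H) (restr e (~: [set v]))}.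
  by move=> a b aP bP /and3P[eab _ _]; rewrite /restr /= eab aP bP.
apply: (sub_in_path sub) pp; apply/allP => z zp; suff : z \in ~: [set v] by []; rewrite in_setC in_set1.
by apply/eqP => zv; move: vnp; rewrite -zv zp.
Qed.

Lemma L5root v y : y != v -> exists w, e v w /\ y \in C v w.
Proof.
move=> yv.
have : connect (restr e setT) v y.
  by rewrite (eq_connect (e' := e)) // => a b; rewrite /restr /= !inE !andbT.
by case/L5 => // w [evw _ yC]; exists w.
Qed.

Lemma L5c p v w : e p v -> e v w -> w != p -> C v w \subset C p v.
Proof.
move=> epv evw wp; apply/subsetP => y; rewrite !inC => /connectP [q pq ->].
have pnC : p \notin C v w.
  by apply/negP => pC; move: wp; rewrite (L1 evw _ pC) ?eqxx // esymm.
have sub : {in C v w &, subrel (restr e (~: [set v])) (restr e (~: [set p]))}.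
  move=> a b aC bC /and3P[eab _ _]; rewrite /restr /= eab !in_setC !in_set1.
  by apply/and3P; split => //; apply: contraNneq pnC => <-.
have allC : all [in C v w] (w :: q).
  by apply/allP => z zq; rewrite inC; apply: (path_connect pq).
apply/connectP; exists (w :: q) => //=.
rewrite (sub_in_path sub allC pq) andbT /restr /= evw !in_setC !in_set1 wp andbT.
by rewrite eq_sym (edge_neq epv).
Qed.

Lemma L5d v w1 w2 y : e v w1 -> e v w2 -> y \in C v w1 -> y \in C v w2 -> w1 = w2.
Proof.
move=> e1 e2 y1 y2; apply: L1 e1 e2 _; rewrite inC in y1 y2 *.
rewrite inC; rewrite inC in y2; by apply: connect_trans y1 _; rewrite conn_sym.
Qed.

Lemma crossing (r : rel V) (A : {pred V}) x p : path r x p -> x \in A -> last x p \notin A ->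
  exists a b, [/\ a \in A, b \notin A & r a b].
Proof.
elim: p x => [|y p IH] x /=; first by move=> _ ->.
case/andP=> rxy pp xA; case: (boolP (y \in A)) => yA; first exact: IH.
by move=> _; exists x, y.
Qed.

Variable X : {set V}.
Let S := min_subtree e X.



Lemma inS s : reflect (forall H : {set V}, X \subset H -> connectedb e H -> s \in H) (s \in S).
Proof.
apply: (iffP bigcapP) => [h H XH cH | h H /andP[XH cH]]; last exact: h.
by apply: h; rewrite XH cH.
Qed.

Lemma XS : X \subset S.
Proof. by apply/subsetP => x xX; apply/inS => H /subsetP XH _; apply: XH. Qed.

Lemma conv s1 s2 p w : upath e s1 s2 p -> s1 \in S -> s2 \in S -> w \in s1 :: p -> w \in S.
Proof.
move=> up s1S s2S wp; apply/inS => H XH cH.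
have s1H := inS _ s1S H XH cH; have s2H := inS _ s2S H XH cH.
have [q [pq lq uq]] := conn_upath ((connectedbP _ cH) _ _ s1H s2H).
have eq := euniq (upath_restr pq lq uq) up.
move: wp; rewrite -eq inE => /orP[/eqP -> //|]; move: w.
by apply/allP; exact: path_restr_all pq.
Qed.


Lemma L7 v w x x0 : e v w -> x \in X -> x \in C v w -> x0 \in X -> x0 \notin C v w -> w \in S.
Proof.
move=> evw xX xC x0X x0C; apply/inS => H XH cH.
have := (connectedbP _ cH) x x0 (subsetP XH _ xX) (subsetP XH _ x0X).
case/connectP => p pp lp; rewrite lp in x0C.
have [a [b [aC bC /and3P[eab aH _]]]] := crossing pp xC x0C.
by have [_ <-] := L2 evw aC bC eab.
Qed.

Lemma L8 v w s : e v w -> (forall x, x \in X -> x \notin C v w) -> s \in S -> s \notin C v w.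
Proof.
move=> evw hX sS; have := inS _ sS (~: C v w); rewrite in_setC; apply; last exact: L4.
by apply/subsetP => x xX; rewrite in_setC hX.
Qed.


Let B := [set v in S | 3 <= deg_in e S v].

Lemma BS : B \subset S.
Proof. by apply/subsetP => v; rewrite inE => /andP[]. Qed.

Lemma step v (N Q : {set V}) x0 :
  v \in Q -> x0 \in X ->
  (forall w, w \in N -> e v w) ->
  (forall w, w \in N -> C v w \subset Q) ->
  (forall w, w \in N -> x0 \notin C v w) ->
  (forall y, y \in Q -> y != v -> exists2 w, w \in N & y \in C v w) ->
  (forall w, w \in N -> w \in S -> #|B :&: C v w| < #|X :&: C v w|) ->
  #|B :&: Q| + #|N :&: S| + (v \in X) <= (v \in B) + #|X :&: Q|.
Proof.
move=> vQ x0X eN subN x0N cov IH.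
set NS := N :&: S.
have h1 : #|B :&: Q| <= (v \in B) + \sum_(w in NS) #|B :&: C v w|.
  have sub : B :&: Q \subset (B :&: [set v]) :|: \bigcup_(w in NS) (B :&: C v w).
    apply/subsetP => y; rewrite inE => /andP[yB yQ].
    case: (eqVneq y v) => [yv|yv]; first by rewrite yv in yB *; rewrite in_setU in_setI in_set1 eqxx yB.
    have [w wN yC] := cov y yQ yv.
    case: (boolP (w \in S)) => wS.
      rewrite in_setU; apply/orP; right; apply/bigcupP; exists w; [by rewrite in_setI wN wS | by rewrite in_setI yB yC].
    exfalso; have yS : y \in S by apply: (subsetP BS).
    have hX : forall x, x \in X -> x \notin C v w.
      move=> x xX; apply/negP => xC.
      by move/negP: wS; apply; exact: L7 (eN w wN) xX xC x0X (x0N w wN).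
    by move: (L8 (eN w wN) hX yS); rewrite yC.
  apply: leq_trans (subset_leq_card sub) _.
  by apply: leq_trans (leq_card_setU _ _) _; rewrite card_setI1 leq_add2l card_bigcup_le.
have h2 : \sum_(w in NS) #|B :&: C v w| + #|NS| <= \sum_(w in NS) #|X :&: C v w|.
  rewrite -sum1_card -big_split /=; apply: leq_sum => w; rewrite inE => /andP[wN wS].
  by rewrite addn1; exact: IH.
have h3 : (v \in X) + \sum_(w in NS) #|X :&: C v w| <= #|X :&: Q|.
  rewrite -(card_setI1 X v) (card_bigcup_disj (F := fun w => X :&: C v w)); last first.
    move=> i j y; rewrite !in_setI => /andP[iN _] /andP[jN _] ij /andP[_ yi] /andP[_ yj].
    by move/eqP: ij; apply; apply: L5d (eN i iN) (eN j jN) yi yj.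
  rewrite -card_union2; last first.
    move=> y; rewrite !inE => /andP[_ /eqP ->] /bigcupP [w wNS]; rewrite inE => /andP[_ vC].
    by move: wNS; rewrite inE => /andP[wN _]; move: vC; rewrite (negbTE (vnotC (eN w wN))).
  apply: subset_leq_card; apply/subsetP => y; rewrite in_setU !in_setI in_set1.
  case/orP => [/andP[yX /eqP yv]|]; first by rewrite yX yv vQ.
  case/bigcupP => w; rewrite !in_setI => /andP[wN _] /andP[yX yC].
  by rewrite yX (subsetP (subN w wN)).
lia.
Qed.


Lemma claim n : forall p v, #|C p v| <= n -> e p v -> v \in S ->
  (exists2 x0, x0 \in X & x0 \notin C p v) -> #|B :&: C p v| < #|X :&: C p v|.
Proof.
elim: n => [|n IHn] p v hn epv vS [x0 x0X x0C].
  by move: hn; rewrite leqn0 => /eqP/cards0_eq/setP/(_ v); rewrite wC inE.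
set N := [set w | e v w & w != p].
have eN : forall w, w \in N -> e v w by move=> w; rewrite inE => /andP[].
have subN : forall w, w \in N -> C v w \subset C p v.
  by move=> w; rewrite inE => /andP[evw wp]; exact: L5c.
have x0N : forall w, w \in N -> x0 \notin C v w.
  by move=> w wN; apply: contraNN x0C => h; exact: (subsetP (subN w wN)) _ h.
have cov : forall y, y \in C p v -> y != v -> exists2 w, w \in N & y \in C v w.
  move=> y; rewrite inC => yC yv; have [w [evw wH yC']] := L5 yC yv.
  by exists w => //; rewrite inE evw; rewrite in_setC in_set1 in wH.
have IH : forall w, w \in N -> w \in S -> #|B :&: C v w| < #|X :&: C v w|.
  move=> w wN wS; apply: (IHn v w _ (eN w wN) wS); last by exists x0 => //; exact: x0N.
  have : C v w \subset C p v :\ v.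
    apply/subsetP => y yC; rewrite in_setD1 (subsetP (subN w wN)) // andbT.
    by apply: contraTneq yC => ->; rewrite vnotC // eN.
  move/subset_leq_card; move: hn; rewrite (cardsD1 v (C p v)) wC; lia.
have st := @step v N (C p v) x0 (wC p v) x0X eN subN x0N cov IH.
suff hNS : (v \in B) + 1 <= #|N :&: S| + (v \in X) by lia.
case vB : (v \in B).
  have : 3 <= deg_in e S v by move: vB; rewrite inE => /andP[].
  rewrite /deg_in (cardsD1 p) => h.
  have : [set w in S | e v w] :\ p \subset N :&: S.
    apply/subsetP => w; rewrite !inE => /andP[wp /andP[wS evw]].
    by rewrite evw wp wS.
  move/subset_leq_card; case: (p \in _) h; lia.
case vX : (v \in X); first by rewrite /=; lia.
rewrite addn0 add0n card_gt0; apply/set0Pn.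
case: (set_0Vmem (N :&: S)) => [NS0|[w wNS]]; last by exists w.
exfalso.
have hX : forall x, x \in X -> x \notin C p v.
  move=> x xX; apply/negP => xC.
  have xv : x != v by apply: contraTneq xX => ->; rewrite vX.
  have [w wN xCw] := cov x xC xv.
  have wS : w \in S by apply: L7 (eN w wN) xX xCw x0X (x0N w wN).
  by move/setP: NS0 => /(_ w); rewrite inE wN wS inE.
by move: (L8 epv hX vS); rewrite wC.
Qed.

Lemma Bbound r : r \in X -> #|B| < #|X|.
Proof.
move=> rX.
set N := [set w | e r w].
have eN : forall w, w \in N -> e r w by move=> w; rewrite inE.
have st := @step r N setT r (in_setT r) rX eN (fun w _ => subsetT _)
  (fun w wN => vnotC (eN w wN)).
rewrite !setIT rX in st.
have cov : forall y, y \in setT -> y != r -> exists2 w, w \in N & y \in C r w.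
  move=> y _ yr; have [w [erw yC]] := L5root yr; by exists w => //; rewrite inE.
have IH : forall w, w \in N -> w \in S -> #|B :&: C r w| < #|X :&: C r w|.
  move=> w wN wS; apply: (claim (leqnn _) (eN w wN) wS); exists r => //.
  exact: vnotC (eN w wN).
have {}st := st cov IH.
case rB : (r \in B); last by move: st; rewrite rB; lia.
have : 3 <= deg_in e S r by move: rB; rewrite inE => /andP[].
have : [set w in S | e r w] \subset N :&: S.
  by apply/subsetP => w; rewrite !inE => /andP[wS erw]; rewrite erw wS.
rewrite /deg_in => /subset_leq_card; move: st; rewrite rB; lia.
Qed.

End Tree.

Lemma lcp (T : eqType) (q p : seq T) : exists c q' p',
  [/\ q = c ++ q', p = c ++ p' &
      forall b c0 q2 p2, q' = b :: q2 -> p' = c0 :: p2 -> b != c0].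
Proof.
elim: q p => [|b q IH] p; first by exists [::], [::], p.
case: p => [|c0 p]; first by exists [::], (b :: q), [::].
case: (eqVneq b c0) => [<-|bc].
  have [c [q' [p' [e1 e2 h]]]] := IH p.
  by exists (b :: c), q', p'; rewrite e1 e2.
by exists [::], (b :: q), (c0 :: p); split => // ? ? ? ? [<- _] [<- _].
Qed.

Section Tree2.
Variable V : finType.
Variable e : rel V.
Hypothesis esymm : symmetric e.
Hypothesis eirr : irreflexive e.
Hypothesis econ : forall x y, connect e x y.
Hypothesis euniq : forall u v p q, upath e u v p -> upath e u v q -> p = q.

Lemma upath_prefix x v s1 s2 : upath e x v (s1 ++ s2) -> upath e x (last x s1) s1.
Proof.
case/and3P; rewrite cat_path -cat_cons cat_uniq => /andP[p1 _] _ /and3P[u1 _ _].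
by rewrite /upath p1 eqxx u1.
Qed.

Lemma inner_of x v p w : upath e x v p -> w \in p -> w != v -> inner e x v w.
Proof.
move=> up wp wv; split; last by split; [exact/eqP | exists p].
case/and3P: up => _ _ /andP[xp _]; apply/eqP; apply: contraNneq xp => <-; exact: wp.
Qed.

Lemma inner_in x v p w : inner e x v w -> upath e x v p -> w \in p.
Proof. by case=> _ [_ [p0 [u0 wp0]]] up; rewrite -(euniq u0 up). Qed.

Lemma upath_rev u v p : upath e u v p -> upath e v u (rev (belast u p)).
Proof.
case/and3P => pp /eqP lp up.
have E : v :: rev (belast u p) = rcons (rev p) u.
  by rewrite -rev_rcons -lp -lastI rev_cons.
apply/and3P; split.
- rewrite -{1}lp rev_path; move: pp; apply: sub_path => a b; by rewrite esymm.
- by rewrite -(last_cons u) E last_rcons.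
- by rewrite E -rev_cons rev_uniq.
Qed.

Lemma mem_rev_belast u v p w : upath e u v p -> w \in p -> w != v -> w \in rev (belast u p).
Proof.
case/and3P => _ /eqP lp _ wp wv; rewrite mem_rev.
have : w \in u :: p by rewrite inE wp orbT.
by rewrite lastI lp mem_rcons inE (negbTE wv).
Qed.

Lemma inner_sym u v w : inner e u v w -> inner e v u w.
Proof.
case=> wu [wv [p [up wp]]]; split => //; split => //.
exists (rev (belast u p)); split; first exact: upath_rev.
by apply: mem_rev_belast up wp _; apply/eqP.
Qed.

Lemma good_sym (Y : {set V}) u v : good_pair e Y u v -> good_pair e Y v u.
Proof.
case=> uY vY [w iw] h; split => //; first by exists w; exact: inner_sym.
by move=> w' /inner_sym; apply: h.
Qed.

Lemma wit_lemma u v z r : inner e u v z -> z != r -> inner e u r z \/ inner e v r z.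
Proof.
move=> iuv zr; have [zu [zv _]] := iuv.
have [pu upu] := upath_ex econ u r; have [pv upv] := upath_ex econ v r.
case: (boolP (z \in pu)) => zpu.
  by left; split => //; split; [exact/eqP | exists pu].
case: (boolP (z \in pv)) => zpv.
  by right; split => //; split; [exact/eqP | exists pv].
exfalso.
have upv' := upath_rev upv.
case/and3P: (upu) => ppu /eqP lpu _; case/and3P: (upv') => ppv /eqP lpv _.
have ps : path e u (pu ++ rev (belast v pv)) by rewrite cat_path ppu lpu.
have ls : last u (pu ++ rev (belast v pv)) = v by rewrite last_cat lpu lpv.
move: ls; case/shortenP: ps => q pq uq sub lq.
have uq' : upath e u v q by rewrite /upath pq lq eqxx uq.
have := sub z (inner_in iuv uq'); rewrite mem_cat (negbTE zpu) /= mem_rev.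
move/mem_belast; rewrite inE (negbTE zpv) orbF; exact/negP/eqP.
Qed.

Lemma uniq_disj (s1 s2 : seq V) x : uniq (s1 ++ s2) -> x \in s1 -> x \notin s2.
Proof.
rewrite cat_uniq => /and3P[_ /hasPn h _] xs1; apply/negP => xs2.
by move: (h x xs2); rewrite xs1.
Qed.

Lemma split_mem (s : seq V) x : x \in s -> exists s1 s2, s = s1 ++ x :: s2.
Proof. by case/splitPr => s1 s2; exists s1, s2. Qed.

Lemma head_rcons_cat (y z : V) s t : head y (rcons s z ++ t) = head y (rcons s z).
Proof. by case: s. Qed.

Variable X : {set V}.
Let S := min_subtree e X.
Let B := [set v in S | 3 <= deg_in e S v].
Let Y := X :|: B.

Lemma YS : Y \subset S.
Proof.
apply/subsetP => y; rewrite in_setU => /orP[yX|]; first exact: (subsetP (XS e X)).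
by rewrite inE => /andP[].
Qed.

Lemma firstY y u z r p : good_pair e Y y u -> inner e y u z -> inner e y r z ->
  r \in Y -> upath e y r p -> u = nth y p (find (fun x => x \in Y) p).
Proof.
move=> gp iu ir rY upr.
have [yY uY _ noY] := gp.
have [q uq] := upath_ex econ y u.
have zq := inner_in iu uq; have zp := inner_in ir upr.
have yu : y != u by apply/eqP => yu; rewrite -yu in iu; exact: inner_self iu.
have yr : y != r by apply/eqP => yr; rewrite -yr in ir; exact: inner_self ir.
have [yS uS rS] : [/\ y \in S, u \in S & r \in S] by rewrite !(subsetP YS).
case/and3P: (uq) => pq /eqP lq uqq; case/and3P: (upr) => pp /eqP lp upp.
have [c [q' [p' [hq hp hd]]]] := lcp q p.
case: q' hq hd => [|b q2] hq hd.
  (* u lies on p *)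
  rewrite cats0 in hq; subst q.
  have uc : u \in c.
    by move: (mem_last y c); rewrite lq inE eq_sym (negbTE yu).
  case/splitPr: uc hp lq uqq uq pq => c1 c2 hp lq uqq uq pq.
  have c1Y : forall w, w \in c1 -> w \notin Y.
    move=> w wc1; apply: noY; apply: inner_of uq _ _; first by rewrite mem_cat wc1.
    move: uqq; rewrite cons_uniq => /andP[_ /uniq_disj /(_ wc1)].
    by rewrite inE negb_or => /andP[].
  rewrite hp -catA cat_cons find_cat.
  have -> : has (fun x => x \in Y) c1 = false by apply/negbTE/hasPn => w /c1Y.
  by rewrite /= uY addn0 nth_cat ltnn subnn.
case: p' hp hd => [|c0 p2] hp hd.
  (* r lies strictly inside q: impossible *)
  rewrite cats0 in hp; subst p; exfalso.
  have rc : r \in c by move: (mem_last y c); rewrite lp inE eq_sym (negbTE yr).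
  have ub : u \in b :: q2 by rewrite -lq hq last_cat /= mem_last.
  have : r \notin Y; last by rewrite rY.
  apply: noY; apply: inner_of uq _ _; first by rewrite hq mem_cat rc.
  apply: contraTneq ub => <-; move: uqq; rewrite hq cons_uniq => /andP[_ /uniq_disj].
  exact.
have bc := hd b c0 q2 p2 erefl erefl.
exfalso.
case/lastP: c hq hp => [|c' m] hq hp.
  (* the paths diverge immediately: contradicts uniqueness of y-z path *)
  rewrite /= in hq hp; subst q p.
  have [q1 [q3 eq1]] := split_mem zq.
  have [p1 [p3 ep1]] := split_mem zp.
  have u1 : upath e y z (rcons q1 z).
    by move: (uq); rewrite eq1 -cat_rcons => /upath_prefix; rewrite last_rcons.
  have u2 : upath e y z (rcons p1 z).
    by move: (upr); rewrite ep1 -cat_rcons => /upath_prefix; rewrite last_rcons.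
  have E := euniq u1 u2.
  move: (congr1 (head y) eq1) (congr1 (head y) ep1).
  rewrite -!cat_rcons !head_rcons_cat E /= => hb hc.
  by move: bc; rewrite hb hc eqxx.
rewrite cat_rcons in hq; rewrite cat_rcons in hp.
set a := last y c'.
have EQq : y :: q = (y :: c') ++ m :: b :: q2 by rewrite hq.
have EQp : y :: p = (y :: c') ++ m :: c0 :: p2 by rewrite hp.
have [eam emb] : e a m /\ e m b.
  by move: pq; rewrite hq cat_path => /andP[_ /= /and3P[-> -> _]].
have emc : e m c0.
  by move: pp; rewrite hp cat_path => /andP[_ /= /and3P[_ -> _]].
have ayc : a \in y :: c' by exact: mem_last.
have [ab mnb] : a != b /\ m \notin b :: q2.
  move: uqq; rewrite EQq cat_uniq => /and3P[_ /hasPn h /andP[mn _]]; split => //.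
  by apply: contraTneq ayc => ->; apply: h; rewrite !inE eqxx !orbT.
have ac : a != c0.
  move: upp; rewrite EQp cat_uniq => /and3P[_ /hasPn h _].
  by apply: contraTneq ayc => ->; apply: h; rewrite !inE eqxx !orbT.
have mq : m \in q by rewrite hq mem_cat inE eqxx orbT.
have [aS bS mS] : [/\ a \in S, b \in S & m \in S].
  split; apply: (conv euniq uq yS uS); rewrite ?EQq ?mem_cat ?ayc ?inE ?eqxx ?mq ?orbT //.
have c0S : c0 \in S.
  by apply: (conv euniq upr yS rS); rewrite EQp mem_cat !inE eqxx !orbT.
have mB : m \in B.
  rewrite inE mS /= /deg_in.
  have : [set a; b; c0] \subset [set w in S | e m w].
    apply/subsetP => w; rewrite !inE; case/orP => [/orP[]|] /eqP ->; rewrite ?aS ?bS ?c0S ?emb ?emc //=.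
    by rewrite esymm.
  move/subset_leq_card; apply: leq_trans.
  by rewrite -setUA cardsU1 cards2 !inE negb_or ab ac bc.
have : m \notin Y; last by rewrite in_setU mB orbT.
apply: noY; apply: inner_of uq mq _.
have ub : u \in b :: q2 by rewrite -lq hq last_cat /= mem_last.
by apply: contraNneq mnb => ->.
Qed.


Lemma Gbound r (Z : {set V}) (g : V -> V -> V) : r \in X ->
  (forall u v, good_pair e Y u v -> g u v = g v u) ->
  (forall u v, good_pair e Y u v -> inner e u v (g u v)) ->
  (forall z, z \in Z -> z \in Y \/ exists u v, good_pair e Y u v /\ z = g u v) ->
  #|Z :\: Y| <= #|Y :\ r|.
Proof.
move=> rX gsym gspec Zdef.
have rY : r \in Y by rewrite in_setU rX.
apply: (count_inj (R := fun y z => exists u, [/\ good_pair e Y y u, z = g y u & inner e y r z])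
  (leqnn _)).
- move=> z; rewrite in_setD => /andP[zY zZ].
  case: (Zdef z zZ) => [zY'|[u [v [gp zg]]]]; first by rewrite zY' in zY.
  have iuv : inner e u v z by rewrite zg; exact: gspec.
  have zr : z != r by apply: contraNneq zY => ->.
  have [uY vY _ _] := gp.
  case: (wit_lemma iuv zr) => [iur|ivr].
  + exists u; last by exists v.
    rewrite in_setD1 uY andbT; apply/eqP => ur; rewrite ur in iur; exact: inner_self iur.
  + exists v.
      rewrite in_setD1 vY andbT; apply/eqP => vr; rewrite vr in ivr; exact: inner_self ivr.
    exists u; split => //; first exact: good_sym.
    by rewrite zg gsym.
- move=> y z1 z2 [u1 [gp1 e1 i1]] [u2 [gp2 e2 i2]].
  have [p up] := upath_ex econ y r.
  have iu1 : inner e y u1 z1 by rewrite e1; exact: gspec.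
  have iu2 : inner e y u2 z2 by rewrite e2; exact: gspec.
  have h1 := firstY gp1 iu1 i1 rY up; have h2 := firstY gp2 iu2 i2 rY up.
  by rewrite e1 e2 h1 h2.
Qed.

End Tree2.

Local Open Scope ring_scope.

Theorem lemma11 (R : realFieldType) (V : finType) (e : rel V) (c : V -> R)
    (a : R) (k : nat) (X Z : {set V}) (g : V -> V -> V) :
  is_tree e ->
  (forall v, 0 < c v) ->
  0 <= a ->
  (exists v, c v <= a) ->
  (* k = k(T, c) = max_{t >= 0} k(T, c, t) *)
  (exists t, 0 <= t /\ kt e c t = k) ->
  (forall t, 0 <= t -> (kt e c t <= k)%N) ->
  (* X contains exactly one (arbitrary) vertex of each heavy module w.r.t. a *)
  (forall x, x \in X -> exists H, H \in heavy_modules e c a /\ x \in H) ->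
  (forall H, H \in heavy_modules e c a -> #|X :&: H| = 1%N) ->
  (* g picks one minimum-cost inner vertex for each (unordered) good pair *)
  (forall u v, good_pair e (Yset e X) u v -> g u v = g v u) ->
  (forall u v, good_pair e (Yset e X) u v ->
     inner e u v (g u v) /\ (forall w, inner e u v w -> c (g u v) <= c w)) ->
  (* Z = V(T_Z) *)
  (forall z, z \in Z <->
     z \in Yset e X \/ exists u v, good_pair e (Yset e X) u v /\ z = g u v) ->
  (#|Z| <= 4 * k - 3)%N.
Proof.
move=> [esymm eirr econ euniq] _ a0 _ _ kmax Xmod Xcard gsym gspec Zdef.
have Xk : (#|X| <= k)%N.
  apply: leq_trans (kmax a a0); rewrite /kt.
  have sub : X \subset \bigcup_(H in heavy_modules e c a) (X :&: H).
    apply/subsetP => x xX; have [H [Hm xH]] := Xmod x xX.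
    by apply/bigcupP; exists H => //; rewrite inE xX xH.
  apply: leq_trans (subset_leq_card sub) _; apply: leq_trans (card_bigcup_le _ _) _.
  by rewrite (eq_bigr (fun _ => 1%N)) ?sum1_card // => H Hm; exact: Xcard.
case: (set_0Vmem X) => [X0 | [r rX]].
  have S0 : min_subtree e X = set0.
    have c0 : connectedb e set0 by apply/forall_inP => x; rewrite inE.
    apply/setP => v; rewrite inE; apply/negbTE/negP => /bigcapP /(_ set0).
    by rewrite X0 sub0set c0 inE => /(_ isT).
  have Y0 : Yset e X = set0 by rewrite /Yset S0 X0; apply/setP => v; rewrite !inE.
  have -> : Z = set0.
    apply/setP => z; rewrite inE; apply/negP => /Zdef [|[u [v [[uY _ _ _] _]]]].
      by rewrite Y0 inE.
    by rewrite Y0 inE in uY.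
  by rewrite cards0.
have hB := Bbound esymm eirr econ euniq rX.
have gspec' : forall u v, good_pair e (Yset e X) u v -> inner e u v (g u v).
  by move=> u v /gspec [].
have Zdef' : forall z, z \in Z -> z \in Yset e X \/
    exists u v, good_pair e (Yset e X) u v /\ z = g u v by move=> z /Zdef.
have hG := Gbound esymm econ euniq rX gsym gspec' Zdef'.
have rY : r \in Yset e X by rewrite /Yset in_setU rX.
have hY := leq_card_setU X [set v in min_subtree e X | (3 <= deg_in e (min_subtree e X) v)%N].
have hZ : (#|Z :&: Yset e X| <= #|Yset e X|)%N by apply: subset_leq_card; apply: subsetIr.
have := cardsID (Yset e X) Z; have := cardsD1 r (Yset e X); rewrite rY.
rewrite /Yset in hZ hG rY * => h1 h2.
have X1 : (0 < #|X|)%N by apply/card_gt0P; exists r.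
move: hY hB hG hZ h1 h2 Xk X1; rewrite /leqif => [[hY _]]; lia.
Qed.
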